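(* Let $s\ge2$ and let $Q^*=\|q_{ik}\|$ ($i\in\{0,\dots,s-1\}$, $k\in\mathbb N$) define a $Q^*$-expansion of $[0,1]$ with $\inf_{i,k}q_{ik}>0$. Then the family $\varPhi$ of (interiors of) $Q^*$-cylinders is faithful for packing dimension calculation: $\dim_P(E,\varPhi)=\dim_{P(\mathit{unc})}(E)$ for every $E\subset[0,1]$.
   Context: A $Q^*$-expansion is a $\tilde Q$-expansion with $N_k=s$ for all $k$: $q_{ik}>0$, $\sum_iq_{ik}=1$, $\prod_k\max_iq_{ik}=0$, and $x=\sum_k\beta_{a_kk}\prod_{j<k}q_{a_jj}$ with $\beta_{ik}=\sum_{l<i}q_{lk}$; the rank-$n$ cylinder $\varDelta_{c_1\dots c_n}=\{x: a_j(x)=c_j,\ j\le n\}$ is an interval of length $\prod_{j\le n}q_{c_jj}$. In $\mathbb R$: an uncentered $\varepsilon$-packing of $E$ is a countable family of pairwise disjoint open intervals of length $\le\varepsilon$ each meeting $E$; $\mathcal P^\alpha_{\varepsilon(\mathit{unc})}(E)=\sup\sum|E_i|^\alpha$, $\mathcal P^\alpha_{0(\mathit{unc})}=\lim_{\varepsilon\to0}$, $\mathcal P^\alpha_{(\mathit{unc})}(E)=\inf\{\sum_j\mathcal P^\alpha_{0(\mathit{unc})}(E_j):E\subset\bigcup E_j\}$, $\dim_{P(\mathit{unc})}(E)=\inf\{\alpha:\mathcal P^\alpha_{(\mathit{unc})}(E)=0\}$; $\dim_P(E,\varPhi)$ is the same using only packings by intervals from $\varPhi$. *)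

(* Defs.v *)
From HB Require Import structures.
From mathcomp Require Import all_boot all_order all_algebra.
From mathcomp Require Import all_classical all_reals all_analysis.
Set Implicit Arguments. Unset Strict Implicit. Unset Printing Implicit Defensive.
Import Order.TTheory GRing.Theory Num.Theory.
Import numFieldNormedType.Exports.
Local Open Scope classical_set_scope.
Local Open Scope ring_scope.

Section Packing.
Variable R : realType.

Definition oitv (p : R * R) : set R := [set x | p.1 < x < p.2].

(* Phi = setT gives uncentered packings. *)
Definition is_packing (Phi : set (R * R)) (eps : R) (E : set R)
    (P : set (R * R)) : Prop :=
  (forall p, P p -> [/\ Phi p, p.1 < p.2, p.2 - p.1 <= eps & oitv p `&` E !=set0])
  /\ (forall p p', P p -> P p' -> p <> p' -> oitv p `&` oitv p' = set0).

Definition pack_eps (Phi : set (R * R)) (alpha eps : R) (E : set R) : \bar R :=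
  ereal_sup [set (\esum_(p in P) ((p.2 - p.1) `^ alpha)%:E)%E
            | P in [set P | is_packing Phi eps E P]].

(* P^alpha_0(E) = lim_{eps -> 0+} P^alpha_eps(E); since pack_eps is
   nondecreasing in eps this limit is the infimum over eps > 0. *)
Definition pack_0 (Phi : set (R * R)) (alpha : R) (E : set R) : \bar R :=
  ereal_inf [set pack_eps Phi alpha eps E | eps in [set eps : R | 0 < eps]].

Definition pack_measure (Phi : set (R * R)) (alpha : R) (E : set R) : \bar R :=
  ereal_inf [set (\sum_(j <oo) pack_0 Phi alpha (F j))%E
            | F in [set F : nat -> set R | E `<=` \bigcup_j F j]].

Definition dimP (Phi : set (R * R)) (E : set R) : \bar R :=
  ereal_inf [set alpha%:E | alpha in [set alpha : R | 0 <= alpha /\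
                                    pack_measure Phi alpha E = 0%E]].

Definition dimP_unc (E : set R) : \bar R := dimP setT E.

End Packing.

Section Qstar.
Variable R : realType.
(* q i k, digits i < s, positions k : nat (0-indexed) *)
Variable q : nat -> nat -> R.

Definition qbeta (i k : nat) : R := \sum_(l < i) q l k.

(* left endpoint and length of the rank-n cylinder Delta_{c_0 ... c_{n-1}} *)
Definition cyl_left (c : nat -> nat) (n : nat) : R :=
  \sum_(k < n) qbeta (c k) k * \prod_(j < k) q (c j) j.
Definition cyl_len (c : nat -> nat) (n : nat) : R :=
  \prod_(j < n) q (c j) j.

Definition Qcyl_family (s : nat) : set (R * R) :=
  [set p | exists (n : nat) (c : nat -> nat), (0 < n)%N /\
     (forall k, (c k < s)%N) /\
     p = (cyl_left c n, cyl_left c n + cyl_len c n)].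

Definition is_Qstar (s : nat) : Prop :=
  [/\ forall i k, (i < s)%N -> 0 < q i k,
      forall k, \sum_(i < s) q i k = 1 &
      (fun n => \prod_(k < n) \big[Num.max/0]_(i < s) q i k) @ \oo --> (0 : R)].
End Qstar.

(* Main.v *)
Require Import Defs.
From HB Require Import structures.
From mathcomp Require Import all_boot all_order all_algebra.
From mathcomp Require Import all_classical all_reals all_analysis.
From mathcomp Require Import ring lra.
From mathcomp Require finmap.
Set Implicit Arguments. Unset Strict Implicit. Unset Printing Implicit Defensive.
Import Order.TTheory GRing.Theory Num.Theory.
Import numFieldNormedType.Exports.
Local Open Scope classical_set_scope.
Local Open Scope ring_scope.

Section Gen.
Variable R : realType.
Implicit Types (Phi : set (R * R)) (E : set R).

Lemma packing_mono Phi Phi' eps eps' E E' P : Phi `<=` Phi' -> eps <= eps' ->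
  E `<=` E' -> is_packing Phi eps E P -> is_packing Phi' eps' E' P.
Proof.
move=> hP he hE [h1 h2]; split => // p Pp.
have [a b c [x [x1 x2]]] := h1 p Pp; split => //.
- exact: hP.
- exact: le_trans he.
- by exists x; split => //; apply: hE.
Qed.

Lemma pack_eps_mono Phi Phi' a eps eps' E E' : Phi `<=` Phi' -> eps <= eps' ->
  E `<=` E' -> (pack_eps Phi a eps E <= pack_eps Phi' a eps' E')%E.
Proof.
move=> hP he hE; apply: ge_ereal_sup => _ [P hPk <-]; apply: ereal_sup_ubound.
by exists P => //; apply: packing_mono hPk.
Qed.

Lemma packing0 Phi eps E : is_packing Phi eps E set0.
Proof. by split. Qed.

Lemma pack_eps_ge0 Phi a eps E : (0 <= pack_eps Phi a eps E)%E.
Proof.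
apply: ereal_sup_ubound; exists set0; first exact: packing0.
exact: esum_set0.
Qed.

Lemma pack_0_ge0 Phi a E : (0 <= pack_0 Phi a E)%E.
Proof. by apply: le_ereal_inf_tmp => _ [eps _ <-]; exact: pack_eps_ge0. Qed.

Lemma pack_0_le_eps Phi a E eps : 0 < eps -> (pack_0 Phi a E <= pack_eps Phi a eps E)%E.
Proof. by move=> e0; apply: ereal_inf_lbound; exists eps. Qed.

Lemma pack_0_mono Phi Phi' a E E' : Phi `<=` Phi' -> E `<=` E' ->
  (pack_0 Phi a E <= pack_0 Phi' a E')%E.
Proof.
move=> hP hE; apply: le_ereal_inf_tmp => _ [eps he <-].
apply: le_trans (pack_0_le_eps _ _ _ he) _.
exact: pack_eps_mono.
Qed.

Lemma pm_ge0 Phi a E : (0 <= pack_measure Phi a E)%E.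
Proof.
apply: le_ereal_inf_tmp => _ [F _ <-]; apply: nneseries_ge0 => n _ _.
exact: pack_0_ge0.
Qed.

Lemma pm_le_cover Phi a E (F : nat -> set R) : E `<=` \bigcup_j F j ->
  (pack_measure Phi a E <= \sum_(j <oo) pack_0 Phi a (F j))%E.
Proof. by move=> hF; apply: ereal_inf_lbound; exists F. Qed.

Lemma pm_mono Phi Phi' a E : Phi `<=` Phi' ->
  (pack_measure Phi a E <= pack_measure Phi' a E)%E.
Proof.
move=> hP; apply: le_ereal_inf_tmp => _ [F hF <-].
apply: le_trans (pm_le_cover _ _ hF) _.
apply: lee_nneseries; first by move=> n _ _; exact: pack_0_ge0.
by move=> n _; exact: pack_0_mono.
Qed.

Lemma pack_0_zero Phi a E :
  (forall e, 0 < e -> exists eps, 0 < eps /\ (pack_eps Phi a eps E <= e%:E)%E) ->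
  pack_0 Phi a E = 0%E.
Proof.
move=> H; apply/eqP; rewrite eq_le pack_0_ge0 andbT; apply/lee_addgt0Pr => e e0.
rewrite add0e; have [eps [h1 h2]] := H e e0.
exact: le_trans (pack_0_le_eps _ _ _ h1) h2.
Qed.

Lemma esum_ub (P : set (R * R)) (f : R * R -> \bar R) B :
  (forall X : seq (R * R), uniq X -> (forall x, x \in X -> P x) ->
     (\sum_(x <- X) f x <= B)%E) -> (esum P f <= B)%E.
Proof.
move=> H; apply: ge_ereal_sup => _ [X [finX XP] <-].
rewrite fsbig_finite //; apply: H; first exact: finmap.fset_uniq.
by move=> x; rewrite in_fset_set // inE; apply: XP.
Qed.

Lemma esum_lb (P : set (R * R)) (f : R * R -> \bar R) (u : seq (R * R)) :
  uniq u -> (forall x, x \in u -> P x) -> (\sum_(x <- u) f x <= esum P f)%E.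
Proof.
move=> uu uP; apply: ereal_sup_ubound; exists [set` u].
  split; first by apply/finite_seqP; exists u.
  by move=> x /= xu; apply: uP.
by rewrite -fsbig_seq.
Qed.

End Gen.
Section Real.
Variable R : realType.

Lemma sum_partition (T : eqType) (X : seq T) (r : T -> nat) N (h : T -> R) :
  (forall p, p \in X -> (r p < N)%N) ->
  \sum_(p <- X) h p = \sum_(k < N) \sum_(p <- X | r p == k) h p.
Proof.
move=> hr.
under [RHS]eq_bigr do rewrite big_mkcond /=.
rewrite exchange_big /= big_seq [RHS]big_seq; apply: eq_bigr => p pX.
rewrite (bigD1 (Ordinal (hr p pX))) //= eqxx big1 ?addr0 // => k hk.
case: eqP => // e; move: hk; rewrite -val_eqE /= e eqxx //.
Qed.

Lemma geom_le (rho : R) N : 0 <= rho < 1 ->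
  \sum_(k < N) rho ^+ k <= (1 - rho)^-1.
Proof.
move=> /andP[r0 r1].
have h : \sum_(k < N) rho ^+ k = (1 - rho ^+ N) / (1 - rho).
  have ne : rho - 1 != 0 by rewrite subr_eq0 lt_eqF.
  rewrite -[1 - rho ^+ N]opprB subrX1 -[1 - rho]opprB invrN mulrN mulNr opprK.
  by rewrite mulrAC mulfV // mul1r.
rewrite h ler_pdivrMr ?subr_gt0 // mulVf ?subr_eq0 ?gt_eqF //.
by rewrite gerBl exprn_ge0.
Qed.

Lemma term_bound (d I L eps a b : R) n :
  0 < d -> 0 < L -> d * I <= L -> L <= eps -> L <= (1 - d) ^+ n -> d < 1 ->
  0 <= a -> a < b -> 0 < I ->
  I `^ b <= d^-1 `^ b * eps `^ ((b - a) / 2) * ((1 - d) `^ ((b - a) / 2)) ^+ n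
     * L `^ a.
Proof.
move=> d0 L0 dI Le Ln d1 a0 ab I0.
set g := (b - a) / 2.
have g0 : 0 <= g by rewrite /g divr_ge0 // subr_ge0 ltW.
have b0 : 0 <= b by apply: le_trans a0 (ltW ab).
have hI : I <= L * d^-1 by rewrite ler_pdivlMr // mulrC.
have e1 : I `^ b <= (L * d^-1) `^ b.
  have hx : 0 <= L * d^-1 by rewrite mulr_ge0 // ?invr_ge0 ltW.
  by apply: ge0_ler_powR => //; rewrite ?nnegrE; lra.
apply: le_trans e1 _.
have Lge : 0 <= L by exact: ltW.
have dinv : 0 <= d^-1 by rewrite invr_ge0 ltW.
rewrite powRM //.
have eb : b = a + g + g by rewrite /g; field.
have Lne : L != 0 by rewrite gt_eqF.
rewrite [in L `^ b]eb !powRD; last 2 first.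
  by apply/implyP => _.
  by apply/implyP => _.
have h1 : L `^ g <= eps `^ g.
  by apply: ge0_ler_powR => //; rewrite ?nnegrE; lra.
have h2 : L `^ g <= ((1 - d) `^ g) ^+ n.
  rewrite -powR_mulrn ?powR_ge0 // powRAC powR_mulrn; last by rewrite subr_ge0 ltW.
  have hx : 0 <= (1 - d) ^+ n by rewrite exprn_ge0 // subr_ge0 ltW.
  by apply: ge0_ler_powR => //; rewrite ?nnegrE; lra.
have p1 := powR_ge0 L a; have p2 := powR_ge0 L g; have p3 := powR_ge0 (d^-1) b.
set C := d^-1 `^ b; set La := L `^ a; set Lg := L `^ g; set Eg := eps `^ g.
set Rn := ((1 - d) `^ g) ^+ n.
have -> : La * Lg * Lg * C = C * (Lg * Lg) * La by ring.
have -> : C * Eg * Rn * La = C * (Eg * Rn) * La by ring.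
apply: ler_pM; [by rewrite mulr_ge0 // mulr_ge0 | exact: p1 | | by []].
apply: ler_pM; [exact: p3 | by rewrite mulr_ge0 | by [] | exact: (ler_pM p2 p2 h1 h2)].
Qed.


End Real.
Section Real2.
Variable R : realType.

Lemma meetA (p p' j : R * R) x x' : oitv p x -> oitv j x -> oitv p' x' ->
  oitv j x' -> p.1 <= j.1 -> p'.1 <= j.1 -> exists z, oitv p z /\ oitv p' z.
Proof.
rewrite /oitv /= => /andP[h1 h2] /andP[h3 h4] /andP[h5 h6] /andP[h7 h8] h9 h10.
case: (lerP p.2 p'.2) => h.
- exists ((j.1 + p.2) / 2); rewrite /=; split; apply/andP; split; lra.
- exists ((j.1 + p'.2) / 2); rewrite /=; split; apply/andP; split; lra.
Qed.

Lemma meetB (p p' j : R * R) x x' : oitv p x -> oitv j x -> oitv p' x' ->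
  oitv j x' -> j.1 < p.1 -> j.1 < p'.1 -> j.2 - j.1 <= p.2 - p.1 ->
  j.2 - j.1 <= p'.2 - p'.1 -> exists z, oitv p z /\ oitv p' z.
Proof.
rewrite /oitv /= => /andP[h1 h2] /andP[h3 h4] /andP[h5 h6] /andP[h7 h8] h9 h10 h11 h12.
case: (lerP p.1 p'.1) => h.
- exists ((p'.1 + j.2) / 2); rewrite /=; split; apply/andP; split; lra.
- exists ((p.1 + j.2) / 2); rewrite /=; split; apply/andP; split; lra.
Qed.

End Real2.
Section Fin.
Variable R : realType.

Lemma sum_const_seq (T : Type) (X : seq T) (c : R) :
  \sum_(x <- X) c = (size X)%:R * c.
Proof.
elim: X => [|x X IH]; first by rewrite big_nil mul0r.
by rewrite big_cons IH /= -nat1r mulrDl mul1r.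
Qed.

Lemma small_eps (K g e eps0 : R) : 0 < g -> 0 < e -> 0 < eps0 ->
  exists eps, [/\ 0 < eps, eps <= eps0 & K * eps `^ g <= e].
Proof.
move=> g0 e0 ep0.
set t := (e / (`|K| + 1)) `^ (g^-1).
have K1 : 0 < `|K| + 1 by rewrite ltr_pwDr.
have t0 : 0 < t by apply: powR_gt0; rewrite divr_gt0.
exists (Num.min eps0 t); split.
- by rewrite lt_min ep0 t0.
- by rewrite ge_min lexx.
have hm : 0 < Num.min eps0 t by rewrite lt_min ep0 t0.
have h1 : Num.min eps0 t `^ g <= t `^ g.
  apply: ge0_ler_powR; rewrite ?nnegrE.
  - exact: ltW.
  - exact: ltW.
  - exact: ltW.
  - by rewrite ge_min lexx orbT.
have h2 : t `^ g = e / (`|K| + 1).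
  by rewrite /t -powRrM mulVf ?gt_eqF // powRr1 // divr_ge0 // ltW.
have p0 := powR_ge0 (Num.min eps0 t) g.
apply: (le_trans (y := `|K| * Num.min eps0 t `^ g)).
  by rewrite ler_wpM2r // ler_norm.
apply: (le_trans (y := `|K| * (e / (`|K| + 1)))).
  by rewrite -h2 ler_wpM2l.
rewrite mulrC -mulrA ger_pMr //.
by rewrite mulrC ler_pdivrMr // mul1r lerDl.
Qed.

Lemma pack_eps_finite (E : set R) (e : seq R) b eps : 0 <= b -> 0 < eps ->
  (forall x, E x -> x \in e) ->
  (pack_eps setT b eps E <= ((size e)%:R * eps `^ b)%:E)%E.
Proof.
move=> b0 e0 hE; apply: ge_ereal_sup => _ [P [h1 h2] <-].
apply: esum_ub => X uX XP.
have H : forall p, exists x, P p -> oitv p x /\ E x.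
  move=> p; case: (pselect (P p)) => Pp; last by exists 0.
  have [_ _ _ [x [xp xE]]] := h1 p Pp.
  by exists x.
have [pt hpt] := choice H.
rewrite sumEFin lee_fin.
apply: (le_trans (y := \sum_(p <- X) eps `^ b)).
  rewrite big_seq [X in _ <= X]big_seq; apply: ler_sum => p pX.
  have [_ p12 peps _] := h1 p (XP p pX).
  apply: ge0_ler_powR; rewrite ?nnegrE //; last exact: ltW.
  by rewrite subr_ge0 ltW.
rewrite sum_const_seq ler_wpM2r ?powR_ge0 // ler_nat.
have -> : size X = size [seq pt p | p <- X] by rewrite size_map.
apply: uniq_leq_size.
  rewrite map_inj_in_uniq // => p p' pX p'X e'.
  case: (eqVneq p p') => // /eqP ne; exfalso.
  have [z1 z2] := hpt p (XP p pX); have [z1' z2'] := hpt p' (XP p' p'X).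
  have := h2 p p' (XP p pX) (XP p' p'X) ne.
  move/seteqP => [+ _] => /(_ (pt p)) /=; apply.
  by split => //; rewrite e'.
move=> y /mapP [p pX ->]; apply: hE.
by have [_ ?] := hpt p (XP p pX).
Qed.

Lemma pack_0_finite (E : set R) (e : seq R) b : 0 < b ->
  (forall x, E x -> x \in e) -> pack_0 setT b E = 0%E.
Proof.
move=> b0 hE; apply: pack_0_zero => e' e'0.
have [eps [ep0 _ hle]] := small_eps (size e)%:R b0 e'0 ltr01.
exists eps; split => //.
apply: le_trans (pack_eps_finite (ltW b0) ep0 hE) _.
by rewrite lee_fin.
Qed.

End Fin.
Section Cyl.
Variable R : realType.
Variable q : nat -> nat -> R.
Variable s : nat.
Variable delta : R.
Hypothesis hs : (2 <= s)%N.
Hypothesis qpos : forall i k, (i < s)%N -> 0 < q i k.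
Hypothesis qsum : forall k, \sum_(i < s) q i k = 1.
Hypothesis dpos : 0 < delta.
Hypothesis dle : forall i k, (i < s)%N -> delta <= q i k.

Definition valid (c : nat -> nat) := forall k, (c k < s)%N.
Definition cp (c : nat -> nat) n : R * R :=
  (cyl_left q c n, cyl_left q c n + cyl_len q c n).

Lemma len_S c n : cyl_len q c n.+1 = cyl_len q c n * q (c n) n.
Proof. by rewrite /cyl_len big_ord_recr. Qed.

Lemma left_S c n : cyl_left q c n.+1 = cyl_left q c n + qbeta q (c n) n * cyl_len q c n.
Proof. by rewrite /cyl_left big_ord_recr. Qed.

Lemma len0 c : cyl_len q c 0 = 1.
Proof. by rewrite /cyl_len big_ord0. Qed.
Lemma left0 c : cyl_left q c 0 = 0.
Proof. by rewrite /cyl_left big_ord0. Qed.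

Lemma len_pre c c' n : (forall k, (k < n)%N -> c k = c' k) ->
  cyl_len q c n = cyl_len q c' n.
Proof. by move=> h; apply: eq_bigr => i _; rewrite h. Qed.

Lemma left_pre c c' n : (forall k, (k < n)%N -> c k = c' k) ->
  cyl_left q c n = cyl_left q c' n.
Proof.
move=> h; apply: eq_bigr => i _; rewrite h //; congr (_ * _).
by apply: len_pre => k kn; apply: h; apply: ltn_trans kn _.
Qed.

Lemma qbeta_ge0 i k : (i <= s)%N -> 0 <= qbeta q i k.
Proof.
move=> his; apply: sumr_ge0 => j _; apply/ltW/qpos.
exact: leq_trans (ltn_ord j) his.
Qed.

Lemma qbeta_S i k : qbeta q i.+1 k = qbeta q i k + q i k.
Proof. by rewrite /qbeta big_ord_recr. Qed.

Lemma qbeta_s k : qbeta q s k = 1.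
Proof. exact: qsum. Qed.

Lemma qbeta_mono i j k : (i <= j)%N -> (j <= s)%N -> qbeta q i k <= qbeta q j k.
Proof.
move=> ij js; elim: j ij js => [|j IH]; first by rewrite leqn0 => /eqP ->.
rewrite leq_eqVlt => /orP[/eqP -> //|ij1] js.
rewrite qbeta_S; have := IH ij1 (ltnW js).
have := qpos k js; lra.
Qed.

Lemma len_gt0 c n : valid c -> 0 < cyl_len q c n.
Proof.
move=> vc; elim: n => [|n IH]; first by rewrite len0.
by rewrite len_S mulr_gt0 //; apply: qpos.
Qed.

Lemma q_le1d i k : (i < s)%N -> q i k <= 1 - delta.
Proof.
move=> iS.
have [j [js ji]] : exists j, (j < s)%N /\ j <> i.
  case: i iS => [|i] iS; first by exists 1%N; split => //; apply: leq_trans hs.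
  by exists 0%N; split => //; apply: leq_trans hs.
have := qsum k.
rewrite (bigD1 (Ordinal iS)) //= (bigD1 (Ordinal js)) /=; last first.
  by apply/eqP => -[]; apply/eqP; apply/eqP.
have := dle k js.
have : 0 <= \sum_(i0 < s | (i0 != Ordinal iS) && (i0 != Ordinal js)) q i0 k.
  by apply: sumr_ge0 => l _; apply/ltW/qpos.
lra.
Qed.

Lemma delta_lt1 : delta < 1.
Proof.
have s0 : (0 < s)%N by apply: leq_trans hs.
have := q_le1d 0 s0; have := dle 0 s0. lra. Qed.

Lemma len_le c n : valid c -> cyl_len q c n <= (1 - delta) ^+ n.
Proof.
move=> vc; elim: n => [|n IH]; first by rewrite len0.
rewrite len_S exprS mulrC; apply: ler_pM => //.
- exact/ltW/qpos.
- exact/ltW/len_gt0.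
- exact: q_le1d.
Qed.

Lemma len_ge c n : valid c -> delta ^+ n <= cyl_len q c n.
Proof.
move=> vc; elim: n => [|n IH]; first by rewrite len0.
rewrite len_S exprS mulrC; apply: ler_pM.
- exact/exprn_ge0/ltW.
- exact/ltW.
- exact: IH.
- exact: dle.
Qed.


Lemma left_le_S c n : valid c -> cyl_left q c n <= cyl_left q c n.+1.
Proof.
move=> vc; rewrite left_S lerDl mulr_ge0 //; last exact/ltW/len_gt0.
exact/qbeta_ge0/ltnW.
Qed.

Lemma right_ge_S c n : valid c ->
  cyl_left q c n.+1 + cyl_len q c n.+1 <= cyl_left q c n + cyl_len q c n.
Proof.
move=> vc; rewrite left_S len_S -addrA lerD2l.
rewrite [X in _ + X]mulrC -mulrDl -qbeta_S ger_pMl; last exact: len_gt0.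
by rewrite -(qbeta_s n); apply: qbeta_mono.
Qed.

Lemma oitv_S c n x : valid c -> oitv (cp c n.+1) x -> oitv (cp c n) x.
Proof.
move=> vc; rewrite /oitv /cp /= => /andP[h1 h2]; apply/andP; split.
- exact: le_lt_trans (left_le_S n vc) h1.
- exact: lt_le_trans h2 (right_ge_S n vc).
Qed.

Lemma same_rank c c' n x : valid c -> valid c' ->
  oitv (cp c n) x -> oitv (cp c' n) x -> forall k, (k < n)%N -> c k = c' k.
Proof.
move=> vc vc'; elim: n => [//|n IH] h h' k kn.
have IH' := IH (oitv_S vc h) (oitv_S vc' h').
rewrite ltnS leq_eqVlt in kn; case/orP: kn => [/eqP ek|kn]; last exact: IH'.
subst k.
move: h h'; rewrite /oitv /cp /= !left_S !len_S (left_pre IH') (len_pre IH').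
set l := cyl_left q c' n; set L := cyl_len q c' n.
have L0 : 0 < L by apply: len_gt0.
move=> /andP[h1 h2] /andP[h3 h4].
have e1 : qbeta q (c n) n * L + L * q (c n) n = qbeta q (c n).+1 n * L.
  by rewrite qbeta_S mulrDl [q _ _ * L]mulrC.
have e2 : qbeta q (c' n) n * L + L * q (c' n) n = qbeta q (c' n).+1 n * L.
  by rewrite qbeta_S mulrDl [q _ _ * L]mulrC.
rewrite -addrA e1 in h2; rewrite -addrA e2 in h4.
case: (ltngtP (c n) (c' n)) => // hlt.
- have hh : qbeta q (c n).+1 n * L <= qbeta q (c' n) n * L.
    by rewrite ler_pM2r // qbeta_mono // ltnW.
  exfalso; clear -hh h1 h2 h3 h4; clearbody l L; lra.
- have hh : qbeta q (c' n).+1 n * L <= qbeta q (c n) n * L.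
    by rewrite ler_pM2r // qbeta_mono // ltnW.
  exfalso; clear -hh h1 h2 h3 h4; clearbody l L; lra.
Qed.

Lemma same_rank_cp c c' n x : valid c -> valid c' ->
  oitv (cp c n) x -> oitv (cp c' n) x -> cp c n = cp c' n.
Proof.
move=> vc vc' h h'; have e := same_rank vc vc' h h'.
by rewrite /cp (left_pre e) (len_pre e).
Qed.

Definition isend (y : R) := exists n c, valid c /\ (y = cyl_left q c n \/ y = cyl_left q c n + cyl_len q c n).

Lemma exists_cyl x : 0 <= x <= 1 -> ~ isend x ->
  forall n, exists c, valid c /\ oitv (cp c n) x.
Proof.
move=> /andP[x0 x1] nend; elim=> [|n [c [vc hc]]].
  have s0 : (0 < s)%N by apply: leq_trans hs.
  exists (fun _ => 0%N); split => //.
  rewrite /oitv /cp /= left0 len0 add0r; apply/andP; split.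
  - rewrite lt_neqAle x0 andbT; apply/eqP => ex; apply: nend.
    by exists 0%N, (fun _ => 0%N); split => //; left; rewrite left0.
  - rewrite lt_neqAle x1 andbT; apply/eqP => ex; apply: nend.
    by exists 0%N, (fun _ => 0%N); split => //; right; rewrite left0 len0 add0r.
move: hc; rewrite /oitv /cp /=; set l := cyl_left q c n; set L := cyl_len q c n.
move=> /andP[h1 h2].
have L0 : 0 < L by apply: len_gt0.
pose P := fun j => (j < s)%N && (l + qbeta q j n * L < x).
have exP : exists j, P j.
  exists 0%N; rewrite /P (leq_trans _ hs) //= /qbeta big_ord0 mul0r addr0 //.
have ubP : forall j, P j -> (j <= s)%N by move=> j /andP[/ltnW].
case: (ex_maxnP exP ubP) => i /andP[iS hi] imax.
pose c' := fun k => if k == n then i else c k.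
have vc' : valid c' by move=> k; rewrite /c'; case: eqP.
have pre : forall k, (k < n)%N -> c k = c' k.
  by move=> k kn; rewrite /c'; case: eqP => // ekn; rewrite ekn ltnn in kn.
have cn : c' n = i by rewrite /c' eqxx.
exists c'; split => //.
rewrite /cp /= left_S len_S cn -(left_pre pre) -(len_pre pre) -/l -/L.
have e1 : qbeta q i n * L + L * q i n = qbeta q i.+1 n * L.
  by rewrite qbeta_S mulrDl [q _ _ * L]mulrC.
rewrite -addrA e1 hi /=.
have ne : l + qbeta q i.+1 n * L != x.
  apply/eqP => ex; symmetry in ex; apply: nend; exists n.+1, c'; split => //; right.
  by rewrite left_S len_S cn -(left_pre pre) -(len_pre pre) -/l -/L -addrA e1.
rewrite lt_def ne /=.
case: (ltnP i.+1 s) => his.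
- have := imax i.+1; rewrite /P his /=.
  by case: ltP => // _; rewrite ltnn; move=> /(_ isT).
- have -> : i.+1 = s by apply/eqP; rewrite eqn_leq his iS.
  by rewrite qbeta_s mul1r ltW.
Qed.


Lemma geom_small r : 0 < r -> exists m, (1 - delta) ^+ m < r.
Proof.
move=> r0.
have d1 := delta_lt1.
have h : `|1 - delta| < 1.
  rewrite ger0_norm; last by rewrite subr_ge0 ltW.
  by rewrite ltrBlDr ltrDl.
have := cvg_expr h.
move/cvgrPdist_lt => /(_ r r0) [N _ HN].
exists N; have := HN N (leqnn N); rewrite /= sub0r normrN.
apply: le_lt_trans; exact: ler_norm.
Qed.

Lemma good_cyl x r : 0 <= x <= 1 -> ~ isend x -> 0 < r <= 1 ->
  exists n c, [/\ (0 < n)%N, valid c, oitv (cp c n) x &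
     delta * r <= cyl_len q c n <= r].
Proof.
move=> hx nend /andP[r0 r1].
have ex := exists_cyl hx nend.
have claim : forall k, (exists n c, [/\ (0 < n)%N, valid c, oitv (cp c n) x &
     delta * r <= cyl_len q c n <= r]) \/
   (exists c, [/\ valid c, oitv (cp c k.+1) x & r < cyl_len q c k.+1]).
  elim=> [|k IH].
  - have [c [vc hc]] := ex 1%N.
    case: (lerP (cyl_len q c 1) r) => hl; [left|right]; last by exists c.
    exists 1%N, c; split => //; rewrite hl andbT.
    have := len_ge 1 vc; rewrite expr1.
    have : delta * r <= delta by rewrite ger_pMr.
    lra.
  - case: IH => [h|[c [vc hc hl]]]; first by left.
    have [c' [vc' hc']] := ex k.+2.
    have e := same_rank vc' vc (oitv_S vc' hc') hc.
    have hl' : delta * r < cyl_len q c' k.+2.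
      rewrite len_S (len_pre e).
      apply: (lt_le_trans (y := delta * cyl_len q c k.+1)).
        by rewrite ltr_pM2l.
      rewrite mulrC ler_pM2l; first exact: dle.
      exact: len_gt0.
    case: (lerP (cyl_len q c' k.+2) r) => hl2; [left|right]; last by exists c'.
    by exists k.+2, c'; split => //; rewrite hl2 andbT ltW.
have [m hm] := geom_small r0.
case: (claim m) => // -[c [vc hc hl]].
have := len_le m.+1 vc.
have : (1 - delta) ^+ m.+1 <= (1 - delta) ^+ m.
  have d1 := delta_lt1.
  rewrite exprS ger_pMl; last first.
    apply: exprn_gt0; lra.
  by rewrite gerBl ltW.
lra.
Qed.


Lemma cp_family c n : (0 < n)%N -> valid c -> Qcyl_family q s (cp c n).
Proof. by move=> n0 vc; exists n, c. Qed.

Definition goodw (F : set R) (p : R * R) (w : nat * (nat -> nat)) :=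
  [/\ (0 < w.1)%N, valid w.2,
      delta * (p.2 - p.1) <= cyl_len q w.2 w.1 <= p.2 - p.1 &
      exists x, [/\ F x, oitv p x & oitv (cp w.2 w.1) x]].

Lemma main_eps (F : set R) a b eps m :
  (forall x, F x -> 0 <= x <= 1 /\ ~ isend x) -> 0 <= a -> a < b ->
  0 < eps <= 1 ->
  (pack_eps (Qcyl_family q s) a eps F <= m%:E)%E ->
  (pack_eps setT b eps F <=
   (delta^-1 `^ b * eps `^ ((b - a) / 2) * (2 * m) *
      (1 - (1 - delta) `^ ((b - a) / 2))^-1)%:E)%E.
Proof.
move=> hF a0 ab /andP[e0 e1] hm.
have m0 : 0 <= m by rewrite -lee_fin; apply: le_trans hm; exact: pack_eps_ge0.
have d1 := delta_lt1.
have d1' : 0 <= 1 - delta by rewrite subr_ge0 ltW.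
have d1'' : 1 - delta < 1 by rewrite gtrBl.
set g := (b - a) / 2.
have g0 : 0 < g by rewrite /g divr_gt0 // subr_gt0.
set rho := (1 - delta) `^ g.
have rho0 : 0 <= rho by apply: powR_ge0.
have rho1 : rho < 1.
  have e : (1:R) `^ g = 1 by rewrite powR1.
  rewrite /rho -[X in _ < X]e; by apply: gt0_ltr_powR => //; rewrite ?nnegrE.
set C := delta^-1 `^ b.
have C0 : 0 <= C by apply: powR_ge0.
apply: ge_ereal_sup => _ [P [hP1 hP2] <-]; apply: esum_ub => X uX XP.
have H : forall p, exists w, P p -> goodw F p w.
  move=> p; case: (pselect (P p)) => Pp; last by exists (0%N, fun _ => 0%N).
  have [_ p12 peps [x [xp xF]]] := hP1 p Pp.
  have [hx nend] := hF x xF.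
  have hr : 0 < p.2 - p.1 <= 1 by rewrite subr_gt0 p12 /=; apply: le_trans e1.
  have [n [c [n0 vc hc hl]]] := good_cyl hx nend hr.
  by exists (n, c) => _; split => //; exists x.
have [w hw] := choice H.
set nn := fun p => (w p).1; set cc := fun p => (w p).2.
set J := fun p => cp (cc p) (nn p).
have hwX : forall p, p \in X -> goodw F p (w p) by move=> p pX; apply: hw; apply: XP.
rewrite sumEFin lee_fin.
apply: (le_trans (y := \sum_(p <- X) C * eps `^ g * rho ^+ nn p *
                          (cyl_len q (cc p) (nn p)) `^ a)).
  rewrite big_seq [X in _ <= X]big_seq; apply: ler_sum => p pX.
  have [n0 vc /andP[l1 l2] _] := hwX p pX.
  have [_ p12 peps _] := hP1 p (XP p pX).
  apply: term_bound => //.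
  - exact: len_gt0.
  - exact: le_trans peps.
  - exact: len_le.
  - by rewrite subr_gt0.
have eJ : forall p, (J p).2 - (J p).1 = cyl_len q (cc p) (nn p).
  by move=> p; rewrite /J /cp /= addrAC subrr add0r.
have inner : forall k (Pr : pred (R * R)),
  (forall p p', p \in X -> p' \in X -> Pr p -> Pr p' -> nn p = k -> nn p' = k ->
     J p = J p' -> p = p') ->
  \sum_(p <- X | (nn p == k) && Pr p) (cyl_len q (cc p) (nn p)) `^ a <= m.
  move=> k Pr hinj.
  set Y := [seq p <- X | (nn p == k) && Pr p].
  set u := [seq J p | p <- Y].
  have uu : uniq u.
    rewrite map_inj_in_uniq ?filter_uniq // => p p'.
    rewrite !mem_filter => /andP[/andP[/eqP hk hP] pX] /andP[/andP[/eqP hk' hP'] pX'] e.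
    exact: hinj.
  have hpack : is_packing (Qcyl_family q s) eps F [set` u].
    split.
    - move=> y /= /mapP [p pY ->]; move: pY; rewrite mem_filter => /andP[_ pX].
      have [n0 vc /andP[l1 l2] [x [xF xp xJ]]] := hwX p pX.
      have [_ p12 peps _] := hP1 p (XP p pX).
      split.
      + exact: cp_family.
      + by rewrite /J /cp /= ltrDl; apply: len_gt0.
      + by rewrite eJ; apply: le_trans peps.
      + by exists x.
    - move=> y y' /= /mapP[p pY ->] /mapP[p' pY' ->] ne.
      move: pY pY'; rewrite !mem_filter => /andP[/andP[/eqP hk _] pX] /andP[/andP[/eqP hk' _] pX'].
      have [n0 vc _ _] := hwX p pX; have [n0' vc' _ _] := hwX p' pX'.
      apply/seteqP; split => z //= [hz hz']; exfalso; apply: ne.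
      move: hz hz'; rewrite /J hk hk' => hz hz'.
      exact: same_rank_cp vc vc' hz hz'.
  have h1 := esum_lb (fun y => ((y.2 - y.1) `^ a)%:E) uu (fun x h => h).
  have h2 : (esum [set` u] (fun y => ((y.2 - y.1) `^ a)%:E) <=
             pack_eps (Qcyl_family q s) a eps F)%E.
    by apply: ereal_sup_ubound; exists [set` u].
  have := le_trans h1 (le_trans h2 hm).
  rewrite sumEFin lee_fin /u big_map /Y big_filter.
  by under eq_bigr do rewrite eJ.
have inner2 : forall k,
  \sum_(p <- X | nn p == k) (cyl_len q (cc p) (nn p)) `^ a <= 2 * m.
  move=> k; rewrite (bigID (fun p => p.1 <= (J p).1)) /=.
  have -> : 2 * m = m + m by ring.
  apply: lerD; apply: inner => p p' pX pX' hP hP' hk hk' e.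
  - case: (eqVneq p p') => // /eqP ne; exfalso.
    have [_ _ _ [x [_ xp xJ]]] := hwX p pX.
    have [_ _ _ [x' [_ xp' xJ']]] := hwX p' pX'.
    have xJ'' : oitv (J p) x' by rewrite e.
    have hP'' : p'.1 <= (J p).1 by rewrite e.
    have [z [zp zp']] := meetA xp xJ xp' xJ'' hP hP''.
    have := hP2 p p' (XP p pX) (XP p' pX') ne.
    by move/seteqP => [+ _] => /(_ z) /= /(_ (conj zp zp')).
  - case: (eqVneq p p') => // /eqP ne; exfalso.
    have [_ _ /andP[l1 l2] [x [_ xp xJ]]] := hwX p pX.
    have [_ _ /andP[l1' l2'] [x' [_ xp' xJ']]] := hwX p' pX'.
    have xJ'' : oitv (J p) x' by rewrite e.
    have hP'' : (J p).1 < p'.1 by rewrite e ltNge.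
    rewrite -ltNge in hP.
    have hl : (J p).2 - (J p).1 <= p.2 - p.1 by rewrite eJ.
    have hl' : (J p).2 - (J p).1 <= p'.2 - p'.1.
      by rewrite e eJ.
    have [z [zp zp']] := meetB xp xJ xp' xJ'' hP hP'' hl hl'.
    have := hP2 p p' (XP p pX) (XP p' pX') ne.
    by move/seteqP => [+ _] => /(_ z) /= /(_ (conj zp zp')).
pose N := (\max_(p <- X) nn p).+1.
rewrite (@sum_partition _ _ X nn N); last first.
  by move=> p pX; rewrite ltnS; apply: (leq_bigmax_seq _ pX).
apply: (le_trans (y := \sum_(k < N) C * eps `^ g * (2 * m) * rho ^+ k)).
  apply: ler_sum => k _.
  have -> : \sum_(p <- X | nn p == k) C * eps `^ g * rho ^+ nn p *
              cyl_len q (cc p) (nn p) `^ a =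
            C * eps `^ g * rho ^+ k * \sum_(p <- X | nn p == k)
              cyl_len q (cc p) (nn p) `^ a.
    by rewrite mulr_sumr; apply: eq_bigr => p /eqP ->.
  rewrite -mulrA [X in _ <= X]mulrAC -[X in _ <= X]mulrA.
  apply: ler_wpM2l; first by rewrite mulr_ge0 // powR_ge0.
  apply: ler_wpM2l; first exact: exprn_ge0.
  exact: inner2.
rewrite -mulr_sumr; apply: ler_wpM2l.
  by rewrite !mulr_ge0 // ?powR_ge0.
by apply: geom_le; rewrite rho0.
Qed.
Fixpoint dl (n : nat) : seq (seq nat) :=
  if n is n'.+1 then [seq rcons l i | l <- dl n', i <- iota 0 s] else [:: [::]].
Definition cl (l : seq nat) : nat -> nat := fun k => nth 0%N l k.

Lemma dl_mem c n : valid c -> [seq c k | k <- iota 0 n] \in dl n.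
Proof.
move=> vc; elim: n => [|n IH]; first by rewrite inE.
rewrite -[n.+1]addn1 iotaD map_cat add0n cats1 addn1 [dl _]/=.
by apply: allpairs_f => //; rewrite mem_iota /= add0n.
Qed.

Lemma cl_pre c n : forall k, (k < n)%N -> c k = cl [seq c k | k <- iota 0 n] k.
Proof. by move=> k kn; rewrite /cl (nth_map 0%N) ?size_iota // nth_iota. Qed.

Definition Dn n := [set y | exists c, valid c /\
  (y = cyl_left q c n \/ y = cyl_left q c n + cyl_len q c n)].
Definition ends n := [seq cyl_left q (cl l) n | l <- dl n] ++
  [seq cyl_left q (cl l) n + cyl_len q (cl l) n | l <- dl n].

Lemma Dn_ends n y : Dn n y -> y \in ends n.
Proof.
move=> [c [vc hy]]; rewrite mem_cat; apply/orP.
have e := @cl_pre c n.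
case: hy => ->; [left|right]; apply/mapP; exists [seq c k | k <- iota 0 n].
- exact: dl_mem.
- by rewrite (left_pre e).
- exact: dl_mem.
- by rewrite (left_pre e) (len_pre e).
Qed.

Lemma main_0 F a b : (forall x, F x -> 0 <= x <= 1 /\ ~ isend x) -> 0 <= a -> a < b ->
  (pack_0 (Qcyl_family q s) a F < +oo)%E -> pack_0 setT b F = 0%E.
Proof.
move=> hF a0 ab hfin.
have [_ [eps0 ep0 <-] hlt] := ereal_inf_lt hfin.
have ep1 : 0 < Num.min eps0 1 by rewrite lt_min ep0 ltr01.
have e11 : Num.min eps0 1 <= 1 by rewrite ge_min lexx orbT.
have e10 : Num.min eps0 1 <= eps0 by rewrite ge_min lexx.
have hle := pack_eps_mono a (@subset_refl _ (Qcyl_family q s)) e10 (@subset_refl _ F).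
have Mfin : pack_eps (Qcyl_family q s) a (Num.min eps0 1) F \is a fin_num.
  by rewrite ge0_fin_numE ?pack_eps_ge0 //; exact: le_lt_trans hle hlt.
have hm := fineK Mfin.
set m := fine _ in hm.
apply: pack_0_zero => e e0.
have g0 : 0 < (b - a) / 2 by rewrite divr_gt0 // subr_gt0.
have [eps [h1 h2 h3]] := small_eps (delta^-1 `^ b * (2 * m) *
   (1 - (1 - delta) `^ ((b - a) / 2))^-1) g0 e0 ep1.
exists eps; split => //.
have hm' : (pack_eps (Qcyl_family q s) a eps F <= m%:E)%E.
  rewrite hm; apply: pack_eps_mono => //.
have := main_eps hF a0 ab _ hm'.
rewrite h1 (le_trans h2 e11) => /(_ isT) /le_trans; apply.
rewrite lee_fin; apply: le_trans h3; rewrite le_eqVlt; apply/orP; left; apply/eqP; ring.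
Qed.

Lemma transfer E a b : (forall x, E x -> 0 <= x <= 1) -> 0 <= a -> a < b ->
  pack_measure (Qcyl_family q s) a E = 0%E -> pack_measure setT b E = 0%E.
Proof.
move=> hE a0 ab h0.
have : (pack_measure (Qcyl_family q s) a E < 1%:E)%E by rewrite h0 lte_fin ltr01.
move=> /ereal_inf_lt [_ [F hF <-] hlt].
have fin : forall j, (pack_0 (Qcyl_family q s) a (F j) < +oo)%E.
  move=> j; apply: le_lt_trans (lt_trans hlt (ltry 1)).
  apply: le_trans (nneseries_lim_ge (m := 0%N) (P := xpredT) j.+1 _); last first.
    by move=> n _ _; exact: pack_0_ge0.
  rewrite big_nat_recr //=; apply: leeDr; apply: sume_ge0 => n _.
  exact: pack_0_ge0.
pose G k := if odd k then (F k./2 `&` [set x | 0 <= x <= 1]) `\` isend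
            else E `&` Dn k./2.
apply/eqP; rewrite eq_le pm_ge0 andbT.
apply: (le_trans (pm_le_cover setT b (F := G) _)).
  move=> x Ex; case: (pselect (isend x)) => [[n [c [vc hc]]]|ne].
    exists n.*2 => //; rewrite /G odd_double half_double; split => //.
    by exists c.
  have [j _ Fjx] := hF x Ex.
  exists j.*2.+1 => //; rewrite /G oddS odd_double /= uphalf_double.
  by split => //; split => //; apply: hE.
rewrite eseries0 // => k _ _; rewrite /G; case: ifP => _.
- apply: (main_0 _ a0 ab).
  + by move=> x [[Fx hx] ne]; split.
  + apply: le_lt_trans (fin k./2).
    by apply: pack_0_mono => // x [[]].
- apply: (pack_0_finite (e := ends k./2)).
  + exact: le_lt_trans a0 ab.
  + by move=> x [_ hx]; apply: Dn_ends.
Qed.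

Lemma dim_eq E : (forall x, E x -> 0 <= x <= 1) ->
  dimP (Qcyl_family q s) E = dimP setT E.
Proof.
move=> hE; apply/eqP; rewrite eq_le; apply/andP; split.
- apply: ereal_inf_le_tmp => _ [a [a0 ha] <-]; exists a => //; split => //.
  apply/eqP; rewrite eq_le pm_ge0 andbT -ha; exact: pm_mono.
- apply: le_ereal_inf_tmp => _ [a [a0 ha] <-].
  apply/lee_addgt0Pr => e e0.
  apply: ereal_inf_lbound; exists (a + e); last by rewrite EFinD.
  split; first by rewrite addr_ge0 // ltW.
  apply: (transfer hE a0) => //.
  by rewrite ltrDl.
Qed.
End Cyl.


Unset Implicit Arguments.

Theorem corollary2 (R : realType) (s : nat) (q : nat -> nat -> R) :
  (2 <= s)%N ->
  is_Qstar q s ->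
  (exists2 delta : R, 0 < delta & forall i k, (i < s)%N -> delta <= q i k) ->
  forall E : set R, E `<=` `[0, 1] ->
    dimP (Qcyl_family q s) E = dimP_unc E.
Proof.
move=> hs [qpos qsum _] [d d0 dle] E hE.
rewrite /dimP_unc; apply: (dim_eq hs qpos qsum d0 dle).
by move=> x /hE; rewrite /= in_itv.
Qed.
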